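(* For every homogeneous ideal $I^h\subset\mathbb{K}[S_M^h]$ and every graded sparse order $\prec_h$, there exists a finite sparse Gröbner basis of $I^h$ with respect to $\prec_h$.
   Context: Let $\mathbb{K}$ be a field of characteristic $0$, $M\subset\mathbb{R}^n$ a polytope with $0\in M$, $S_M\subset\mathbb{Z}^n$ the affine semigroup generated by $M\cap\mathbb{Z}^n$ and $S_M^h\subset\mathbb{Z}^{n+1}$ the one generated by $\{(s,1):s\in M\cap\mathbb{Z}^n\}$, both assumed pointed. $\mathbb{K}[S]$ is the semigroup algebra with monomials $X^s$, $X^sX^t=X^{s+t}$; $\mathbb{K}[S_M^h]$ is graded by $\deg X^{(s,d)}=d$ and ''homogeneous'' refers to this grading. $\chi:\mathbb{K}[S_M^h]\to\mathbb{K}[S_M]$, $X^{(s,d)}\mapsto X^s$. The affine degree $\delta^A(X^s)$ is the least $d$ with $(s,d)\in S_M^h$, extended to polynomials by the maximum over the support; the sparse degree of $f\in\mathbb{K}[S_M^h]$ is $\delta(f)=\delta^A(\chi(f))$. Given a monomial order $<_M$ on $\mathbb{K}[S_M]$, the sparse order is $X^s\prec X^r$ iff $\delta^A(X^s)<\delta^A(X^r)$, or equality and $X^s<_MX^r$; the associated graded sparse order on monomials of $\mathbb{K}[S_M^h]$ is $X^{(s,d)}\prec_hX^{(r,d')}$ iff $d<d'$, or $d=d'$ and $X^s\prec X^r$. Divisibility: $X^{(s,d_s)}\mid_\delta X^{(r,d_r)}$ if some monomial $X^{(t,d_t)}$ satisfies $X^{(s,d_s)}X^{(t,d_t)}=X^{(r,d_r)}$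 and $\delta(X^{(s,d_s)})+\delta(X^{(t,d_t)})=\delta(X^{(r,d_r)})$. A sparse Gröbner basis of $I^h$ w.r.t. $\prec_h$ is a subset of $I^h$ generating $I^h$ such that for every nonzero $f\in I^h$ some element $g$ of it satisfies $\mathrm{LM}_{\prec_h}(g)\mid_\delta\mathrm{LM}_{\prec_h}(f)$. *)

(* Defs.v *)
From HB Require Import structures.
From mathcomp Require Import all_boot all_order all_algebra.
From mathcomp Require Import finmap.
From mathcomp.multinomials Require Import monalg.
From mathcomp Require Import boolp reals.
Set Implicit Arguments. Unset Strict Implicit. Unset Printing Implicit Defensive.
Import Order.TTheory GRing.Theory Num.Theory.
Local Open Scope ring_scope.

(* Z^n (exponents of K[S_M]) and Z^{n+1} = Z^n x Z (exponents of K[S_M^h]). *)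
Definition pt (n : nat) := 'rV[int]_n.
Definition hpt (n : nat) := ('rV[int]_n * int)%type.

(* M = conv(V) : the polytope spanned by the finite point set V in R^n. *)
Definition in_conv (R : realType) (n : nat) (V : seq 'rV[R]_n) (x : 'rV[R]_n)
  : Prop :=
  exists lam : 'I_(size V) -> R,
    (forall i, 0 <= lam i) /\ \sum_i lam i = 1 /\ x = \sum_i lam i *: V`_i.

Definition latt (R : realType) (n : nat) (V : seq 'rV[R]_n) (s : pt n) : Prop :=
  in_conv V (map_mx (fun z : int => z%:~R) s).

Definition inSM (R : realType) (n : nat) (V : seq 'rV[R]_n) (s : pt n) : Prop :=
  exists ts : seq (pt n), (forall t, t \in ts -> latt V t) /\
    s = \sum_(t <- ts) t.

(* S_M^h : affine semigroup generated by {(s,1) : s ∈ M ∩ Z^n} *)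
Definition inSMh (R : realType) (n : nat) (V : seq 'rV[R]_n) (p : hpt n) : Prop :=
  exists ts : seq (pt n), (forall t, t \in ts -> latt V t) /\
    p = (\sum_(t <- ts) t, (size ts)%:Z).

Definition pointed (G : zmodType) (S : G -> Prop) : Prop :=
  forall x, S x -> S (- x) -> x = 0.

(* Laurent-type ambient algebra K[Z^{n+1}] as finitely supported functions;
   K[S_M^h] is the subset of those supported in S_M^h. *)
Definition Lpoly (K : fieldType) (n : nat) := {malg K[hpt n]}.

Definition inKSh (K : fieldType) (R : realType) (n : nat) (V : seq 'rV[R]_n)
  (f : Lpoly K n) : Prop :=
  forall x, x \in msupp f -> inSMh V x.

Definition lmul (K : fieldType) (n : nat) (f g : Lpoly K n) : Lpoly K n :=
  \sum_(a <- msupp f) \sum_(b <- msupp g) << f@_a * g@_b *g (a + b) >>.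

Definition is_ideal (K : fieldType) (R : realType) (n : nat) (V : seq 'rV[R]_n)
  (I : Lpoly K n -> Prop) : Prop :=
  [/\ forall f, I f -> inKSh V f,
      I 0,
      forall f g, I f -> I g -> I (f + g) &
      forall f g, inKSh V g -> I f -> I (lmul g f)].

Definition hcomp (K : fieldType) (n : nat) (d : int) (f : Lpoly K n) : Lpoly K n :=
  [malg x in msupp f => if x.2 == d then f@_x else 0].

Definition homogeneous_ideal (K : fieldType) (n : nat) (I : Lpoly K n -> Prop)
  : Prop :=
  forall f d, I f -> I (hcomp d f).

Definition monomial_order (R : realType) (n : nat) (V : seq 'rV[R]_n)
  (lt : pt n -> pt n -> Prop) : Prop :=
  [/\ forall s, inSM V s -> ~ lt s s,
      forall s t u, inSM V s -> inSM V t -> inSM V u -> lt s t -> lt t u -> lt s u,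
      forall s t, inSM V s -> inSM V t -> s = t \/ lt s t \/ lt t s,
      forall s t u, inSM V s -> inSM V t -> inSM V u -> lt s t -> lt (s + u) (t + u) &
      forall P : pt n -> Prop, (exists s, inSM V s /\ P s) ->
        exists m, [/\ inSM V m, P m & forall s, inSM V s -> P s -> ~ lt s m]].

Lemma ex_asbool (P : nat -> Prop) :
  (exists d, P d) -> exists d, `[< P d >].
Proof. by case=> d Pd; exists d; apply/asboolP. Qed.

(* affine degree δ^A(X^s) = least d with (s,d) ∈ S_M^h (0 if s ∉ S_M) *)
Definition deltaA (R : realType) (n : nat) (V : seq 'rV[R]_n) (s : pt n) : nat :=
  match pselect (exists d : nat, inSMh V (s, d%:Z)) with
  | left H => ex_minn (ex_asbool H)
  | right _ => 0%N
  end.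

Definition sdeg (R : realType) (n : nat) (V : seq 'rV[R]_n) (p : hpt n) : nat :=
  deltaA V p.1.

Definition sparse_lt (R : realType) (n : nat) (V : seq 'rV[R]_n)
  (lt : pt n -> pt n -> Prop) (s r : pt n) : Prop :=
  (deltaA V s < deltaA V r)%N \/ (deltaA V s = deltaA V r /\ lt s r).

Definition gsparse_lt (R : realType) (n : nat) (V : seq 'rV[R]_n)
  (lt : pt n -> pt n -> Prop) (p q : hpt n) : Prop :=
  p.2 < q.2 \/ (p.2 = q.2 /\ sparse_lt V lt p.1 q.1).

Definition isLM (K : fieldType) (R : realType) (n : nat) (V : seq 'rV[R]_n)
  (lt : pt n -> pt n -> Prop) (f : Lpoly K n) (m : hpt n) : Prop :=
  m \in msupp f /\
  forall m', m' \in msupp f -> m' <> m -> gsparse_lt V lt m' m.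

Definition ddiv (R : realType) (n : nat) (V : seq 'rV[R]_n) (a b : hpt n) : Prop :=
  exists t : hpt n, [/\ inSMh V t, a + t = b & (sdeg V a + sdeg V t = sdeg V b)%N].

Definition sparse_GB (K : fieldType) (R : realType) (n : nat) (V : seq 'rV[R]_n)
  (lt : pt n -> pt n -> Prop) (I : Lpoly K n -> Prop) (G : seq (Lpoly K n)) : Prop :=
  [/\ forall g, g \in G -> I g,
      forall f, I f -> exists c : 'I_(size G) -> Lpoly K n,
        (forall i, inKSh V (c i)) /\ f = \sum_(i < size G) lmul (c i) G`_i &
      forall f, I f -> f <> 0 ->
        exists g, g \in G /\
          exists mg mf, [/\ isLM V lt g mg, isLM V lt f mf & ddiv V mg mf]].

(* Main.v *)
Require Import Defs.
From HB Require Import structures.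
From mathcomp Require Import all_boot all_order all_algebra.
From mathcomp Require Import finmap.
From mathcomp.multinomials Require Import monalg.
From mathcomp Require Import boolp reals.
From mathcomp Require Import zify.
Import Order.TTheory GRing.Theory Num.Theory.
Set Implicit Arguments. Unset Strict Implicit. Unset Printing Implicit Defensive.

Section Dickson.
Variable (A : eqType).

Definition cover k (phi : A -> nat -> nat) (L : A -> Prop) (F : seq A) :=
  (forall a, a \in F -> L a) /\
  (forall b, L b -> exists2 a, a \in F & forall j, j < k -> phi a j <= phi b j).

Lemma cover_bigU k phi m (Ls : nat -> A -> Prop) :
  (forall i, i < m -> exists F, cover k phi (Ls i) F) ->
  exists F, cover k phi (fun a => exists2 i, i < m & Ls i a) F.
Proof.
elim: m => [|m IH] H.
  by exists [::]; split => // b [i].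
have [F1 [H11 H12]] : exists F, cover k phi (Ls m) F by apply: H.
have [F2 [H21 H22]] := IH (fun i lti => H i (ltnW lti)).
exists (F1 ++ F2); split.
  move=> a; rewrite mem_cat => /orP [/H11 ?|/H21 [i ? ?]]; first by exists m.
  by exists i => //; apply: ltnW.
move=> b [i]; rewrite ltnS leq_eqVlt => /orP [/eqP -> /H12 [a aF ?]|lti Lb].
  by exists a => //; rewrite mem_cat aF.
have [a aF ?] : exists2 a, a \in F2 & forall j, j < k -> phi a j <= phi b j.
  by apply: H22; exists i.
by exists a => //; rewrite mem_cat aF orbT.
Qed.

Lemma dickson k : forall phi L, exists F, cover k phi L F.
Proof.
elim: k => [|k IH] phi L.
  case: (pselect (exists b, L b)) => [[b Lb]|nL].
    exists [:: b]; split; first by move=> a; rewrite inE => /eqP ->.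
    by move=> c _; exists b; rewrite ?inE.
  by exists [::]; split => // b Lb; exfalso; apply: nL; exists b.
case: (pselect (exists b, L b)) => [[x0 Lx0]|nL]; last first.
  by exists [::]; split => // b Lb; exfalso; apply: nL; exists b.
pose Liv i v b := L b /\ phi b i = v.
have Hiv : forall i v, i < k.+1 -> exists F, cover k.+1 phi (Liv i v) F.
  move=> i v lti.
  have [F [HF1 HF2]] := IH (fun b j => phi b (bump i j)) (Liv i v).
  exists F; split => // b Lb.
  have [a aF Ha] := HF2 b Lb; exists a => // j ltj.
  case: (eqVneq j i) => [->|nji].
    by have [_ ->] := HF1 a aF; case: Lb => _ ->.
  have := Ha (unbump i j); rewrite unbumpK ?inE //; apply.
  rewrite /unbump /bump in ltj nji *; case: (ltnP i j) => /= h; lia.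
have Hi : forall i, i < k.+1 ->
    exists F, cover k.+1 phi (fun b => exists2 v, v < phi x0 i & Liv i v b) F.
  by move=> i lti; apply: cover_bigU => v _; apply: Hiv.
have [F [HF1 HF2]] := cover_bigU Hi.
exists (x0 :: F); split.
  move=> a; rewrite inE => /orP [/eqP ->//|/HF1 [i _ [v _ []]]] //.
move=> b Lb.
case: (pselect (forall j, j < k.+1 -> phi x0 j <= phi b j)) => [H|H].
  by exists x0 => //; rewrite inE eqxx.
have [i lti lt_b] : exists2 i, i < k.+1 & phi b i < phi x0 i.
  apply: contrapT => nH; apply: H => j ltj; rewrite leqNgt; apply/negP => h.
  by apply: nH; exists j.
have [a aF Ha] : exists2 a, a \in F & forall j, j < k.+1 -> phi a j <= phi b j.
  by apply: HF2; exists i => //; exists (phi b i).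
by exists a => //; rewrite inE aF orbT.
Qed.

End Dickson.

Local Open Scope ring_scope.

Section Delta.
Variables (R : realType) (n : nat) (V : seq 'rV[R]_n).
Hypothesis zeroM : in_conv V 0.

Lemma latt0 : latt V 0.
Proof.
rewrite /latt. have E : map_mx (fun z : int => z%:~R) (0 : pt n) = (0 : 'rV[R]_n).
  by apply/matrixP => i j; rewrite !mxE.
rewrite E.
exact: zeroM.
Qed.

Lemma pairD (a c : pt n) (b d : int) : ((a, b) + (c, d) : hpt n) = (a + c, b + d).
Proof. by []. Qed.

Lemma inSMh_add p q : inSMh V p -> inSMh V q -> inSMh V (p + q).
Proof.
case: p => s1 d1; case: q => s2 d2.
move=> [ts1 [H1 [-> ->]]] [ts2 [H2 [-> ->]]].
exists (ts1 ++ ts2); split.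
  by move=> t; rewrite mem_cat => /orP [/H1|/H2].
by rewrite big_cat size_cat PoszD.
Qed.

Lemma inSMh_pad s (d e : nat) : inSMh V (s, d%:Z) -> (d <= e)%N -> inSMh V (s, e%:Z).
Proof.
move=> H de.
have H0 : inSMh V (0, (e - d)%N%:Z).
  exists (nseq (e - d) 0); split.
    by move=> t /nseqP [-> _]; exact: latt0.
  by rewrite size_nseq big_nseq iter_addr_0 mul0rn.
have := inSMh_add H H0; rewrite pairD.
by rewrite addr0 -PoszD subnKC.
Qed.

Lemma inSMh_nat p : inSMh V p -> exists d : nat, p.2 = d%:Z.
Proof. by case=> ts [_ ->]; exists (size ts). Qed.

Lemma inSMh_inSM p : inSMh V p -> inSM V p.1.
Proof. by case=> ts [H ->]; exists ts. Qed.

Lemma inSM_h s : inSM V s -> exists d : nat, inSMh V (s, d%:Z).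
Proof. by case=> ts [H ->]; exists (size ts); exists ts. Qed.

Lemma deltaA_spec s (d : nat) : inSMh V (s, d%:Z) ->
  inSMh V (s, (deltaA V s)%:Z) /\ (deltaA V s <= d)%N.
Proof.
move=> Hd; rewrite /deltaA; case: pselect => [H|nH]; last by exfalso; apply: nH; exists d.
case: ex_minnP => m /asboolP Hm Hmin; split => //.
by apply: Hmin; apply/asboolP.
Qed.

Lemma deltaA_h s : inSM V s -> inSMh V (s, (deltaA V s)%:Z).
Proof. by case/inSM_h => d /deltaA_spec []. Qed.

Lemma deltaA_le p : inSMh V p -> (deltaA V p.1)%:Z <= p.2.
Proof.
case: p => s d H; have [e /= Ed] := inSMh_nat H; move: H; rewrite Ed => H.
by have [_] := deltaA_spec H; rewrite lez_nat.
Qed.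

Lemma deltaA_subadd s t : inSM V s -> inSM V t ->
  (deltaA V (s + t)%R <= deltaA V s + deltaA V t)%N.
Proof.
move=> /deltaA_h Hs /deltaA_h Ht.
have := inSMh_add Hs Ht; rewrite pairD -PoszD.
by case/deltaA_spec.
Qed.

Definition goodl (s : pt n) (ts : seq (pt n)) :=
  [/\ forall t, t \in ts -> latt V t /\ t != 0, s = \sum_(t <- ts) t &
      size ts = deltaA V s].

Lemma goodl_ex s : inSM V s -> exists ts, goodl s ts.
Proof.
move=> /deltaA_h [ts0 [H0 [Es Ed]]].
have Ed' : size ts0 = deltaA V s by rewrite Ed.
set ts := [seq t <- ts0 | t != 0].
have Hs : s = \sum_(t <- ts) t.
  rewrite Es big_filter [RHS]big_mkcond /=; apply: eq_bigr => t _.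
  by case: eqP => // ->.
have Hl : forall t, t \in ts -> latt V t /\ t != 0.
  by move=> t; rewrite mem_filter => /andP [nz /H0].
have le1 : (size ts <= deltaA V s)%N by rewrite -Ed' size_filter count_size.
have le2 : (deltaA V s <= size ts)%N.
  have Hh : inSMh V (s, (size ts)%:Z).
    by exists ts; split; [move=> t /Hl [] | rewrite -Hs].
  by case: (deltaA_spec Hh).
by exists ts; split => //; apply/eqP; rewrite eqn_leq le1 le2.
Qed.

End Delta.


Section Fin.
Variables (R : realType) (n : nat) (V : seq 'rV[R]_n).

Lemma latt_bound : exists N : nat, forall s, latt V s -> forall j, `|s 0 j| <= N%:Z.
Proof.
set B := \sum_(i < size V) \sum_(j < n) `|V`_i 0 j|.
have B0 : 0 <= B by apply: sumr_ge0 => i _; apply: sumr_ge0 => j _.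
exists (Num.Def.archi_bound B) => s [lam [lam0 [lam1 Hs]]] j.
have E : (s 0 j)%:~R = \sum_i lam i * V`_i 0 j.
  by have := congr1 (fun M : 'rV[R]_n => M 0 j) Hs; rewrite /= mxE summxE => ->; apply: eq_bigr => i _; rewrite mxE.
have lam_le1 : forall i, lam i <= 1.
  move=> i; rewrite -lam1 (bigD1 i) //= lerDl; exact: sumr_ge0.
have : `|(s 0 j)%:~R : R| < (Num.Def.archi_bound B)%:R.
  apply: le_lt_trans (archi_boundP B0).
  rewrite E; apply: le_trans (ler_norm_sum _ _ _) _.
  rewrite /B; apply: ler_sum => i _.
  rewrite normrM (ger0_norm (lam0 i)).
  apply: le_trans (_ : `|V`_i 0 j| <= _).
    by rewrite ler_piMl.
  by rewrite (bigD1 j) //= lerDl; apply: sumr_ge0.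
rewrite -intr_norm -pmulrn ltr_nat => h.
lia.
Qed.

Lemma latt_finite : exists P : seq (pt n), forall s, latt V s -> s \in P.
Proof.
have [N HN] := latt_bound.
pose g (f : {ffun 'I_n -> 'I_(N + N).+1}) : pt n := \row_j ((f j : nat)%:Z - N%:Z).
exists (map g (enum {ffun 'I_n -> 'I_(N + N).+1})) => s Ls.
pose f := [ffun j : 'I_n => (inord (absz (s 0 j + N%:Z)) : 'I_(N + N).+1)].
have -> : s = g f.
  apply/matrixP => i j; rewrite !mxE ffunE (ord1 i).
  have h := HN s Ls j; rewrite inordK; last by lia.
  lia.
by apply: map_f; rewrite mem_enum.
Qed.

End Fin.


Section Ord.
Variables (R : realType) (n : nat) (V : seq 'rV[R]_n).
Variable lt : pt n -> pt n -> Prop.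
Hypothesis ltM : monomial_order V lt.

Local Notation glt := (gsparse_lt V lt).
Local Notation SH := (inSMh V).
Local Notation dA := (deltaA V).

Lemma glt_irr p : SH p -> ~ glt p p.
Proof.
case: ltM => irr _ _ _ _ /inSMh_inSM Hs.
by case=> [|[_ [|[_ h]]]]; rewrite ?ltxx ?ltnn //; apply: irr h.
Qed.

Lemma glt_trans p q r : SH p -> SH q -> SH r -> glt p q -> glt q r -> glt p r.
Proof.
case: ltM => _ tr _ _ _ /inSMh_inSM Hp /inSMh_inSM Hq /inSMh_inSM Hr.
rewrite /gsparse_lt /sparse_lt.
case=> [h1|[e1 h1]] [h2|[e2 h2]].
- by left; apply: lt_trans h1 h2.
- by left; rewrite -e2.
- by left; rewrite e1.
right; split; first by rewrite e1.
case: h1 => [h1|[d1 l1]]; case: h2 => [h2|[d2 l2]].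
- by left; apply: ltn_trans h1 h2.
- by left; rewrite -d2.
- by left; rewrite d1.
by right; split; [rewrite d1 | apply: tr l1 l2].
Qed.

Lemma glt_total p q : SH p -> SH q -> p = q \/ glt p q \/ glt q p.
Proof.
case: ltM => _ _ tot _ _.
case: p => s d; case: q => s' d' /inSMh_inSM Hp /inSMh_inSM Hq.
rewrite /gsparse_lt /sparse_lt /=.
case: (ltgtP d d') => [h|h|<-]; [by right; left; left | by right; right; left|].
case: (ltngtP (dA s) (dA s')) => [h|h|e].
- by right; left; right; split => //; left.
- by right; right; right; split => //; left.
case: (tot s s' Hp Hq) => [->|[h|h]]; first by left.
- by right; left; right; split => //; right.
- by right; right; right; split => //; right.
Qed.

Lemma glt_shift b mg t : SH b -> SH mg -> SH t ->
  (dA mg.1 + dA t.1 = dA (mg + t)%R.1)%N -> glt b mg -> glt (b + t) (mg + t).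
Proof.
case: ltM => _ _ _ comp _.
case: b => b1 b2; case: mg => m1 m2; case: t => t1 t2 Hb Hm Ht.
have Hb1 := inSMh_inSM Hb; have Hm1 := inSMh_inSM Hm; have Ht1 := inSMh_inSM Ht.
rewrite !pairD /= => Ed.
have sub := deltaA_subadd Hb1 Ht1; rewrite /= in sub Hb1 Hm1 Ht1.
rewrite /gsparse_lt /sparse_lt /=.
case=> [h|[e h]]; first by left; rewrite ltrD2r.
right; split; first by rewrite e.
case: h => [h|[d h]]; first by left; lia.
have : (dA (b1 + t1)%R <= dA (m1 + t1)%R)%N by lia.
rewrite leq_eqVlt => /orP [/eqP ->|h']; last by left.
by right; split => //; apply: comp.
Qed.

Lemma glt_wf (P : hpt n -> Prop) :
  (forall m, SH m -> (forall m', SH m' -> glt m' m -> P m') -> P m) ->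
  forall m, SH m -> P m.
Proof.
move=> H m Hm; apply: contrapT => nP.
case: ltM => _ _ _ _ wf.
pose Q m := SH m /\ ~ P m.
have ex1 : exists d : nat, exists s, Q (s, d%:Z).
  have [d Ed] := inSMh_nat Hm; exists d, m.1; by rewrite -Ed; case: m Hm nP {Ed}.
case: (ex_minnP (ex_asbool ex1)) => d0 /asboolP [s0 Q0] min0.
have ex2 : exists e : nat, exists s, Q (s, d0%:Z) /\ dA s = e.
  by exists (dA s0), s0.
case: (ex_minnP (ex_asbool ex2)) => e0 /asboolP [s1 [Q1 E1]] min1.
have [m0 [Sm0 [Qm0 Em0] minm0]] := wf (fun s => Q (s, d0%:Z) /\ dA s = e0)
   (ex_intro _ s1 (conj (inSMh_inSM (proj1 Q1)) (conj Q1 E1))).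
case: Qm0 => SHm0 nPm0; apply: nPm0; apply: H => // [[s' d']] Sm' glt'.
apply: contrapT => nP'.
have [dd Edd] := inSMh_nat Sm'; rewrite /= in Edd; subst d'.
have le_d : (d0 <= dd)%N by apply: min0; apply/asboolP; exists s'.
case: glt' => [/=|[/= Edd [hd|[hd hl]]]]; first by rewrite ltz_nat; lia.
- have : (e0 <= dA s')%N.
    by apply: min1; apply/asboolP; exists s'; split => //; rewrite -Edd.
  by rewrite -Em0; lia.
- apply: (minm0 s' (inSMh_inSM Sm')) => //; split; last by rewrite hd.
  by rewrite -Edd.
Qed.

Lemma max_ex (s : seq (hpt n)) : s != [::] -> (forall x, x \in s -> SH x) ->
  exists2 m, m \in s & forall m', m' \in s -> m' <> m -> glt m' m.
Proof.
elim: s => [//|x s IH] _ Hs.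
have Hx : SH x by apply: Hs; rewrite inE eqxx.
case: (eqVneq s [::]) => [->|ns].
  by exists x; rewrite ?inE // => m'; rewrite inE => /eqP.
have Hs' : forall y, y \in s -> SH y by move=> y ys; apply: Hs; rewrite inE ys orbT.
have [m ms Hm] := IH ns Hs'.
have Sm : SH m by apply: Hs; rewrite inE ms orbT.
case: (glt_total Hx Sm) => [e|[h|h]].
- exists m; first by rewrite inE ms orbT.
  move=> m'; rewrite inE => /orP [/eqP -> ne|m's ne]; last exact: Hm.
  by exfalso; apply: ne.
- exists m; first by rewrite inE ms orbT.
  move=> m'; rewrite inE => /orP [/eqP -> ne|m's ne]; last exact: Hm.
  done.
- exists x; first by rewrite inE eqxx.
  move=> m'; rewrite inE => /orP [/eqP -> ne|m's ne]; first by exfalso.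
  have Sm' : SH m' by apply: Hs'.
  case: (eqVneq m' m) => [->//|ne'].
  apply: (glt_trans Sm' Sm Hx _ h).
  by apply: Hm => //; apply/eqP.
Qed.

End Ord.


Lemma perm_sub (T : eqType) (s1 s2 : seq T) :
  (forall y, (count_mem y s1 <= count_mem y s2)%N) -> exists u, perm_eq s2 (s1 ++ u).
Proof.
elim: s1 s2 => [|x s1 IH] s2 H; first by exists s2.
have xs2 : x \in s2.
  rewrite -has_pred1 has_count; apply: leq_trans (H x); rewrite /= eqxx; lia.
have [u Hu] : exists u, perm_eq (rem x s2) (s1 ++ u).
  apply: IH => y; rewrite count_mem_rem; have := H y; rewrite /=.
  case: (eqVneq x y) => _ /=; lia.
exists u; apply: perm_trans (perm_to_rem xs2) _.
by rewrite cat_cons perm_cons.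
Qed.

Section Lmul.
Variables (K : fieldType) (n : nat).
Local Notation P := (Lpoly K n).

Lemma lmulw (d1 d2 : {fset hpt n}) (f g : P) :
  (msupp f `<=` d1)%fset -> (msupp g `<=` d2)%fset ->
  lmul f g = \sum_(a <- d1) \sum_(b <- d2) << f@_a * g@_b *g (a + b) >>.
Proof.
move=> le_d1 le_d2; rewrite /lmul (big_fset_incl _ le_d1) /=.
  apply/eq_bigr=> k1 _; apply/big_fset_incl => // k _ /mcoeff_outdom ->.
  by rewrite mulr0 monalgU0.
move=> k _ /mcoeff_outdom g1k.
by rewrite big1 => // k' _; rewrite g1k mul0r monalgU0.
Qed.

Lemma lmul0l (g : P) : lmul 0 g = 0.
Proof. by rewrite /lmul msupp0 big_seq_fset0. Qed.

Lemma lmulDl (f1 f2 g : P) : lmul (f1 + f2) g = lmul f1 g + lmul f2 g.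
Proof.
have s1 : (msupp f1 `<=` msupp f1 `|` msupp f2)%fset by apply: fsubsetUl.
have s2 : (msupp f2 `<=` msupp f1 `|` msupp f2)%fset by apply: fsubsetUr.
rewrite (lmulw (msuppD_le f1 f2) (fsubset_refl (msupp g))).
rewrite (lmulw s1 (fsubset_refl (msupp g))) (lmulw s2 (fsubset_refl (msupp g))).
rewrite -big_split; apply: eq_bigr => a _; rewrite -big_split; apply: eq_bigr => b _.
by rewrite mcoeffD mulrDl monalgUD.
Qed.

Lemma lmulNl (f g : P) : lmul (- f) g = - lmul f g.
Proof. by apply/eqP; rewrite -addr_eq0 -lmulDl addNr lmul0l. Qed.

Lemma lmulU_coef c t (g : P) b0 : (lmul << c *g t >> g)@_(t + b0) = c * g@_b0.
Proof.
rewrite (lmulw msuppU_le (fsubset_refl (msupp g))) big_seq_fset1 mcoeffUU raddf_sum /=.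
have -> : g@_b0 = \sum_(b <- msupp g) g@_b *+ (b == b0).
  by rewrite {1}(monalgE g) raddf_sum /=; apply: eq_bigr => b _; rewrite mcoeffU.
rewrite mulr_sumr; apply: eq_bigr => b _.
by rewrite !mcoeffU (inj_eq (addrI t)) mulrnAr.
Qed.

Lemma lmulU_supp c t (g : P) x : x \in msupp (lmul << c *g t >> g) ->
  exists2 b, b \in msupp g & x = t + b.
Proof.
move=> xs; apply: contrapT => nH; move: xs; rewrite -mcoeff_neq0 => /negP; apply.
rewrite (lmulw msuppU_le (fsubset_refl (msupp g))) big_seq_fset1 raddf_sum /=.
apply/eqP; rewrite big1_fset // => b bg _; rewrite mcoeffU; case: eqP => // e; exfalso.
by apply: nH; exists b.
Qed.

End Lmul.

Section KSh.
Variables (K : fieldType) (R : realType) (n : nat) (V : seq 'rV[R]_n).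
Local Notation P := (Lpoly K n).

Lemma inKSh0 : inKSh V (0 : P).
Proof. by move=> x; rewrite msupp0 in_fset0. Qed.

Lemma inKShD (f g : P) : inKSh V f -> inKSh V g -> inKSh V (f + g).
Proof.
move=> Hf Hg x /(fsubsetP (msuppD_le f g)); rewrite in_fsetU => /orP [/Hf|/Hg] //.
Qed.

Lemma inKShN (f : P) : inKSh V f -> inKSh V (- f).
Proof. by move=> Hf x; rewrite msuppN => /Hf. Qed.

Lemma inKShU (c : K) t : inSMh V t -> inKSh V (<< c *g t >> : P).
Proof. by move=> Ht x /(fsubsetP msuppU_le); rewrite in_fset1 => /eqP ->. Qed.

End KSh.


Section Main.
Variables (K : fieldType) (R : realType) (n : nat) (V : seq 'rV[R]_n).
Hypothesis zeroM : in_conv V 0.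
Variable lt : pt n -> pt n -> Prop.
Hypothesis ltM : monomial_order V lt.
Variable I : Lpoly K n -> Prop.
Hypothesis idealI : is_ideal V I.

Local Notation P := (Lpoly K n).
Local Notation glt := (gsparse_lt V lt).
Local Notation SH := (inSMh V).
Local Notation dA := (deltaA V).

Lemma I_supp f x : I f -> x \in msupp f -> SH x.
Proof. by case: idealI => H _ _ _ /H; apply. Qed.

Lemma LM_ex (f : P) : inKSh V f -> f <> 0 -> exists m, isLM V lt f m.
Proof.
move=> Hf nf.
have : msupp f != fset0.
  apply/negP => /eqP e; apply: nf; by rewrite (monalgE f) e big_seq_fset0.
case/fset0Pn => x xf.
have xf' : x \in (msupp f : seq _) by [].
have ns : (msupp f : seq _) != [::] by apply/eqP => e0; rewrite e0 in xf'.
have [m ms Hm] := max_ex ltM ns (fun y ys => Hf y ys).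
by exists m; split.
Qed.

Lemma LM_uniq (f : P) m1 m2 : inKSh V f -> isLM V lt f m1 -> isLM V lt f m2 -> m1 = m2.
Proof.
move=> Hf [s1 H1] [s2 H2]; apply: contrapT => ne.
have h1 := H1 m2 s2 (fun e => ne (esym e)).
have h2 := H2 m1 s1 ne.
exact: (glt_irr ltM (Hf _ s1) (glt_trans ltM (Hf _ s1) (Hf _ s2) (Hf _ s1) h2 h1)).
Qed.


Definition tsb (b : hpt n) : seq (pt n) :=
  match pselect (exists ts, goodl V b.1 ts) with
  | left H => proj1_sig (cid H)
  | right _ => [::]
  end.

Lemma tsb_good b : inSM V b.1 -> goodl V b.1 (tsb b).
Proof.
move=> H; rewrite /tsb; case: pselect => [H'|nH]; first by case: (cid H').
by exfalso; apply: nH; apply: goodl_ex.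
Qed.

Variable P0 : seq (pt n).
Hypothesis HP0 : forall s, latt V s -> s \in P0.

Definition phi (b : hpt n) (j : nat) : nat :=
  if (j < size P0)%N then count_mem (nth 0 P0 j) (tsb b)
  else (absz b.2 - dA b.1)%N.

Lemma key a b : SH a -> SH b ->
  (forall j, (j < (size P0).+1)%N -> (phi a j <= phi b j)%N) -> ddiv V a b.
Proof.
move=> Sa Sb Hphi.
have Ma := inSMh_inSM Sa; have Mb := inSMh_inSM Sb.
have [Ha1 Ha2 Ha3] := tsb_good Ma; have [Hb1 Hb2 Hb3] := tsb_good Mb.
have cnt : forall y, (count_mem y (tsb a) <= count_mem y (tsb b))%N.
  move=> y; case: (boolP (y \in P0)) => yP.
    have := Hphi (index y P0); rewrite /phi index_mem yP nth_index //.
    by apply; apply: leq_trans (index_size _ _) _.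
  have -> : count_mem y (tsb a) = 0%N; last by [].
  apply/count_memPn; apply/negP => /Ha1 [/HP0 yP' _].
  by rewrite yP' in yP.
have [u Hu] := perm_sub cnt.
have last := Hphi (size P0) (ltnSn _); rewrite /phi ltnn in last.
have [da Eda] := inSMh_nat Sa; have [db Edb] := inSMh_nat Sb.
rewrite Eda Edb /= in last.
have la := deltaA_le Sa; have lb := deltaA_le Sb.
rewrite Eda lez_nat in la; rewrite Edb lez_nat in lb.
have sz : size (tsb b) = (size (tsb a) + size u)%N by rewrite (perm_size Hu) size_cat.
have edA : dA b.1 = (dA a.1 + size u)%N by rewrite -Ha3 -Hb3 sz.
have Hu1 : forall x, x \in u -> latt V x.
  by move=> x xu; have /Hb1 [] : x \in tsb b by rewrite (perm_mem Hu) mem_cat xu orbT.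
have Su : SH (\sum_(x <- u) x, (size u)%:Z) by exists u.
have Mu : inSM V (\sum_(x <- u) x) := inSMh_inSM Su.
have [Su' du] := deltaA_spec Su.
have sub := deltaA_subadd Ma Mu.
have Esum : b.1 = a.1 + \sum_(x <- u) x.
  by rewrite Hb2 (perm_big _ Hu) big_cat /= -Ha2.
exists (\sum_(x <- u) x, b.2 - a.2); split.
- have -> : b.2 - a.2 = (db - da)%N%:Z.
    rewrite Eda Edb -subzn //.
    have e : dA b.1 = (dA a.1 + size u)%N by rewrite -Ha3 -Hb3 sz.
    lia.
  apply: (inSMh_pad zeroM Su); lia.
- have -> : forall p q : hpt n, p + q = (p.1 + q.1, p.2 + q.2) by case=> ? ? [? ?].
  by rewrite /= -Esum addrC subrK; case: (b).
- rewrite /sdeg /= -Esum in sub *; rewrite edA in sub *.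
  by apply/eqP; rewrite eqn_leq leq_add2l du /=; exact: sub.
Qed.


Lemma gen (G : seq P) :
  (forall g, g \in G -> I g) ->
  (forall f, I f -> f <> 0 -> exists g, g \in G /\
      exists mg mf, [/\ isLM V lt g mg, isLM V lt f mf & ddiv V mg mf]) ->
  forall f, I f -> exists c : 'I_(size G) -> P,
    (forall i, inKSh V (c i)) /\ f = \sum_(i < size G) lmul (c i) G`_i.
Proof.
move=> HG1 HG3.
case: idealI => Isub I0 Iadd Imul.
have rep0 : exists c : 'I_(size G) -> P,
    (forall i, inKSh V (c i)) /\ 0 = \sum_(i < size G) lmul (c i) G`_i.
  exists (fun _ => 0); split => [i|]; first exact: inKSh0.
  by rewrite big1 // => i _; rewrite lmul0l.
suff main : forall m, SH m -> forall f, I f -> f <> 0 -> isLM V lt f m ->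
    exists c : 'I_(size G) -> P,
    (forall i, inKSh V (c i)) /\ f = \sum_(i < size G) lmul (c i) G`_i.
  move=> f If; case: (pselect (f = 0)) => [->|nf] //.
  have [m Hm] := LM_ex (Isub f If) nf; apply: (main m) => //.
  exact: (Isub f If _ (proj1 Hm)).
apply: (glt_wf ltM) => m Sm IH f If nf LMf.
have [g [gG [mg [mf [LMg LMf' dd]]]]] := HG3 f If nf.
case: dd => t [St Eadd0 Edeg].
have Em := LM_uniq (Isub f If) LMf' LMf.
have Eadd : mg + t = m by rewrite Eadd0 Em.
have Ig := HG1 g gG; have KSg := Isub g Ig.
have mgs := proj1 LMg.
have gmg : g@_mg != 0 by rewrite mcoeff_neq0.
pose cf := f@_m / g@_mg.
pose h : P := << - cf *g t >>.
pose f' := f + lmul h g.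
have If' : I f' by apply: Iadd => //; apply: Imul => //; exact: inKShU.
have Hf' : forall x, x \in msupp f' -> glt x m.
  move=> x xf'.
  have xm : x <> m.
    move=> e; move: xf'; rewrite e -mcoeff_neq0 /f' mcoeffD.
    have -> : (lmul h g)@_m = - cf * g@_mg by rewrite -Eadd addrC lmulU_coef.
    by rewrite /cf mulNr divfK // subrr eqxx.
  move: xf' => /(fsubsetP (msuppD_le _ _)); rewrite in_fsetU => /orP [xf|xl].
    exact: (proj2 LMf x xf xm).
  have [b bg eb] := lmulU_supp xl; subst x.
  have bmg : b <> mg by move=> eb; apply: xm; rewrite eb addrC.
  have Edeg' : (dA mg.1 + dA t.1 = dA (mg + t)%R.1)%N by rewrite Eadd0; exact: Edeg.
  have := glt_shift ltM (KSg b bg) (KSg mg mgs) St Edeg' (proj2 LMg b bg bmg).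
  by rewrite Eadd addrC.
have [c' [Kc' Ef']] : exists c' : 'I_(size G) -> P,
    (forall i, inKSh V (c' i)) /\ f' = \sum_(i < size G) lmul (c' i) G`_i.
  case: (pselect (f' = 0)) => [->|nf'] //.
  have [m' LM'] := LM_ex (Isub _ If') nf'.
  apply: (IH m') => //; [exact: (Isub _ If' _ (proj1 LM')) | exact: (Hf' _ (proj1 LM'))].
have jlt : (index g G < size G)%N by rewrite index_mem.
pose j := Ordinal jlt.
exists (fun i => c' i + (if i == j then - h else 0)); split.
  move=> i; apply: inKShD => //; case: eqP => _; last exact: inKSh0.
  by apply: inKShN; exact: inKShU.
under eq_bigr => i _ do rewrite lmulDl.
have cj : (if j == j then - h else 0) = - h by rewrite eqxx.
have Gj : G`_j = g by apply: nth_index.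
rewrite big_split; transitivity (f' + lmul (- h) g); first by rewrite lmulNl /f' addrK.
congr (_ + _); first exact: Ef'.
rewrite (bigD1 j) // cj big1 => [|i nij]; last first.
  by rewrite (negbTE nij) lmul0l.
by rewrite Gj Monoid.mulm1.
Qed.

Definition Lset b := exists f, I f /\ f <> 0 /\ isLM V lt f b.

Lemma main_ex : exists G, sparse_GB V lt I G.
Proof.
case: (idealI) => Isub _ _ _.
have [F [HF1 HF2]] := dickson (size P0).+1 phi Lset.
pose gof a : P := if pselect (Lset a) is left H then proj1_sig (cid H) else 0.
have gofP : forall a, Lset a -> [/\ I (gof a), gof a <> 0 & isLM V lt (gof a) a].
  move=> a La; rewrite /gof; case: pselect => [H|//].
  by case: (cid H) => /= g [? [? ?]]; split.
pose G := map gof F.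
have HG1 : forall g, g \in G -> I g.
  by move=> g /mapP [a aF ->]; case: (gofP a (HF1 a aF)).
have HG3 : forall f, I f -> f <> 0 -> exists g, g \in G /\
      exists mg mf, [/\ isLM V lt g mg, isLM V lt f mf & ddiv V mg mf].
  move=> f If nf; have [m Hm] := LM_ex (Isub f If) nf.
  have Lm : Lset m by exists f.
  have [a aF Ha] := HF2 m Lm.
  have [Ia nza LMa] := gofP a (HF1 a aF).
  exists (gof a); split; first by apply: map_f.
  exists a, m; split => //; apply: key => //.
    exact: (Isub _ Ia _ (proj1 LMa)).
  exact: (Isub _ If _ (proj1 Hm)).
by exists G; split => //; exact: gen.
Qed.

End Main.

Lemma final (K : fieldType) (R : realType) (n : nat) (V : seq 'rV[R]_n)
  (zeroM : in_conv V 0) (lt : pt n -> pt n -> Prop) (ltM : monomial_order V lt)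
  (I : Lpoly K n -> Prop) (idealI : is_ideal V I) :
  exists G : seq (Lpoly K n), sparse_GB V lt I G.
Proof.
have [P0 HP0] := latt_finite V.
exact: (main_ex zeroM ltM idealI HP0).
Qed.


Theorem mainTheorem4
  (K : fieldType) (charK0 : [pchar K] =i pred0)
  (R : realType) (n : nat) (V : seq 'rV[R]_n)
  (zeroM : in_conv V 0)
  (pointedSM : pointed (inSM V)) (pointedSMh : pointed (inSMh V))
  (lt : pt n -> pt n -> Prop) (ltM : monomial_order V lt)
  (I : Lpoly K n -> Prop) (idealI : is_ideal V I)
  (homI : homogeneous_ideal I) :
  exists G : seq (Lpoly K n), sparse_GB V lt I G.
Proof.
exact: (final zeroM ltM idealI).
Qed.
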